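(* Let $L$ be a simple $3$-connected planar graph with at least four vertices, with a fixed planar embedding, and let $r_0,r_1$ be vertices on the outer face of $L$ such that $(r_0,r_1)$ is an edge of $L$. Let $L'=L-(r_0,r_1)$ (delete the edge, keep the vertices) and let $C$ be the boundary of the outer face of $L'$, which is a simple cycle. Then every non-trivial bridge of $C$ in $L'$ has at least three vertices of attachment.
   Context: For a subgraph $H$ of a graph $G$, a vertex of attachment of $H$ is a vertex of $H$ incident with some edge of $G$ not belonging to $H$. For a cycle $J$ of $G$, a bridge of $J$ in $G$ is a subgraph $B$ of $G$ such that (1) every vertex of attachment of $B$ is a vertex of $J$, (2) $B$ is not a subgraph of $J$, and (3) no proper subgraph of $B$ has both properties (1) and (2). A bridge consisting of a single chord of $J$ is called trivial; all other bridges are non-trivial. *)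

(* Defs.v *)
(* Plane graphs are represented combinatorially by rotation
   systems (combinatorial maps) of genus 0. *)
From mathcomp Require Import all_boot.
Set Implicit Arguments.
Unset Strict Implicit.
Unset Printing Implicit Defensive.

Section Maps.
Variables (T D : finType).

(* darts D, hd d = vertex at which dart d starts, alpha = reversal of a dart,
   sigma = rotation around the vertex.                                      *)

Definition map_adj (hd : D -> T) (alpha : D -> D) : rel T :=
  fun x y => [exists d, (hd d == x) && (hd (alpha d) == y)].

Definition rotation_system (hd : D -> T) (alpha sigma : D -> D) : Prop :=
  [/\ involutive alpha, forall d, alpha d != d, injective sigma,
      forall d, hd (sigma d) = hd d
    & (forall d d', hd d = hd d' -> fconnect sigma d d') /\
      (forall x, exists d, hd d = x)].

(* face permutation: faces are its orbits *)
Definition face_perm (alpha sigma : D -> D) : D -> D := fun d => sigma (alpha d).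

Definition connected_map (alpha sigma : D -> D) : Prop :=
  forall d d', connect [rel a b | (b == alpha a) || (b == sigma a)] d d'.

(* planar embedding: connected rotation system of Euler genus 0 *)
Definition planar_map (hd : D -> T) (alpha sigma : D -> D) : Prop :=
  [/\ rotation_system hd alpha sigma, connected_map alpha sigma
    & #|T| + fcard (face_perm alpha sigma) D = #|D| %/ 2 + 2].

Definition simple_map (hd : D -> T) (alpha : D -> D) : Prop :=
  (forall d, hd (alpha d) != hd d) /\
  (forall d d', hd d = hd d' -> hd (alpha d) = hd (alpha d') -> d = d').

Definition on_face (hd : D -> T) (phi : D -> D) (o : D) (x : T) : bool :=
  [exists d, fconnect phi o d && (hd d == x)].

(* deleting the edge whose darts form e: rotation skips the deleted darts *)
Definition del_rot (sigma : D -> D) (e : {set D}) : D -> D :=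
  fun d => if sigma d \in e then sigma (sigma d) else sigma d.

Definition del_adj (hd : D -> T) (alpha : D -> D) (e : {set D}) : rel T :=
  fun x y => [exists d, [&& d \notin e, hd d == x & hd (alpha d) == y]].

End Maps.

Section Graphs.
Variable T : finType.

Definition k_connected (g : rel T) (k : nat) : Prop :=
  k < #|T| /\
  forall S : {set T}, #|S| < k -> forall x y, x \notin S -> y \notin S ->
    connect [rel a b | [&& g a b, a \notin S & b \notin S]] x y.

Definition edges (g : rel T) : {set {set T}} :=
  [set e : {set T} | [exists x, exists y, g x y && (e == [set x; y])]].

Definition subgraph (g : rel T) (V : {set T}) (E : {set {set T}}) : bool :=
  (E \subset edges g) && [forall e in E, e \subset V].

Definition attachments (g : rel T) (V : {set T}) (E : {set {set T}}) : {set T} :=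
  [set x in V | [exists e in edges g, (x \in e) && (e \notin E)]].

Definition bridge_cond (g : rel T) (VJ : {set T}) (EJ : {set {set T}})
    (V : {set T}) (E : {set {set T}}) : bool :=
  [&& subgraph g V E, attachments g V E \subset VJ
    & ~~ ((V \subset VJ) && (E \subset EJ))].

Definition is_bridge (g : rel T) (VJ : {set T}) (EJ : {set {set T}})
    (V : {set T}) (E : {set {set T}}) : Prop :=
  bridge_cond g VJ EJ V E /\
  forall (V' : {set T}) (E' : {set {set T}}),
    V' \subset V -> E' \subset E -> (V', E') != (V, E) ->
    ~~ bridge_cond g VJ EJ V' E'.

Definition trivial_bridge (V : {set T}) (E : {set {set T}}) : bool :=
  [exists e : {set T}, (E == [set e]) && (V == e)].

End Graphs.

(* Main.v *)
Require Import Defs.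
From mathcomp Require Import all_boot.
From mathcomp Require Import fingroup perm zify.
Set Implicit Arguments.
Unset Strict Implicit.
Unset Printing Implicit Defensive.
Lemma connect_closure (T : finType) (r : rel T) (P : pred T) x y :
  (forall a b, P a -> r a b -> P b) -> connect r x y -> P x -> P y.
Proof.
move=> cl /connectP [p pth ->] {y}; elim: p x pth => //= z p IH x /andP [rxz pth] Px.
exact: (IH z pth (cl _ _ Px rxz)).
Qed.

Section Euler.
Variables (D : finType) (a : D -> D) (s : {perm D}).
Hypothesis aK : involutive a.
Hypothesis a_nfix : forall x, a x != x.

Definition aX_fun (X : {set D}) z := if (z \in X) && (a z \in X) then a z else z.

Lemma aX_inj X : injective (aX_fun X).
Proof.
move=> z1 z2; rewrite /aX_fun.
case: ifP => [/andP [h1 h1'] | h1]; case: ifP => [/andP [h2 h2'] | h2].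
- by move/(congr1 a); rewrite !aK.
- move=> E; move: h2; rewrite -E aK h1 h1' //.
- move=> E; move: h1; rewrite E aK h2 h2' //.
- by [].
Qed.

Definition pX X : {perm D} := perm (@aX_inj X).

Definition rX (X : {set D}) : rel D := fun x y =>
  [|| y == s x, x == s y | [&& x \in X, a x \in X & y == a x]].

Lemma rX_sym X : symmetric (rX X).
Proof.
move=> x y; rewrite /rX; apply/idP/idP.
- case/or3P => [->|->|/and3P [h1 h2 /eqP ->]]; rewrite ?orbT //.
  by rewrite aK h1 h2 eqxx !orbT.
- case/or3P => [->|->|/and3P [h1 h2 /eqP ->]]; rewrite ?orbT //.
  by rewrite aK h1 h2 eqxx !orbT.
Qed.

Definition cls X u := [set w | connect (rX X) u w].
Definition ncomp X := #|[set cls X u | u : D]|.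

Definition aclosed (X : {set D}) := forall x, (a x \in X) = (x \in X).

Lemma phi_connect X z : connect (rX X) z ((pX X * s)%g z).
Proof.
rewrite permM permE /aX_fun.
case: ifP => [/andP [h1 h2] | _].
- apply: (@connect_trans _ _ (a z)); apply: connect1; rewrite /rX.
  + by rewrite h1 h2 eqxx !orbT.
  + by rewrite eqxx.
- by apply: connect1; rewrite /rX eqxx.
Qed.

Lemma porbit_connect X u w : w \in porbit (pX X * s)%g u -> connect (rX X) u w.
Proof.
case/porbitP => i ->; elim: i => [|i IH]; first by rewrite expg0 perm1.
by rewrite expgSr permM; apply: connect_trans IH (phi_connect _ _).
Qed.

Lemma porbit_s b : porbit s (s b) = porbit s b.
Proof. by have := porbit_perm s 1 b; rewrite expg1. Qed.

Lemma cls_porbit0 u : cls set0 u = porbit s u.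
Proof.
apply/setP => w; rewrite inE; apply/idP/idP.
- move=> cw; apply: (connect_closure (P := fun w => w \in porbit s u)) cw _; last first.
    exact: porbit_id.
  move=> b c Pb; rewrite /rX inE andFb orbF => /orP [/eqP -> | /eqP Eb].
  + by rewrite -eq_porbit_mem porbit_s eq_porbit_mem.
  + by rewrite -eq_porbit_mem -porbit_s -Eb eq_porbit_mem.
- case/porbitP => i ->; elim: i => [|i IH]; first by rewrite expg0 perm1.
  rewrite expgSr permM; apply: connect_trans IH (connect1 _).
  by rewrite /rX eqxx.
Qed.

Lemma pX0 : pX set0 = 1%g.
Proof. by apply/permP => z; rewrite permE perm1 /aX_fun inE. Qed.

Lemma pX_step X x : aclosed X -> x \in X ->
  pX X = (tperm x (a x) * pX (X :\ x :\ a x))%g.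
Proof.
move=> clX xX; apply/permP => z; rewrite permM.
have axX : a x \in X by rewrite clX.
have nax : a x != x := a_nfix x.
case: (tpermP x (a x) z) => [->|->|zx zax]; rewrite !permE /aX_fun.
- by rewrite xX axX /= !inE eqxx.
- by rewrite aK axX xX /= !inE eqxx /= andbF.
- move/eqP in zx; move/eqP in zax.
  have az_x : (a z != x) by apply: contra_neq zax => <-; rewrite aK.
  have az_ax : (a z != a x) by apply: contra_neq zx => /(congr1 a); rewrite !aK.
  by rewrite !inE zx zax az_x az_ax.
Qed.

Lemma aclosed_step X x : aclosed X -> aclosed (X :\ x :\ a x).
Proof.
move=> clX z; rewrite !inE clX.
have e1 : (a z != a x) = (z != x).
  by apply/idP/idP; [apply: contra_neq => ->|apply: contra_neq => /(congr1 a)]; rewrite ?aK.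
have e2 : (a z != x) = (z != a x).
  by apply/idP/idP; [apply: contra_neq => ->|apply: contra_neq => <-]; rewrite ?aK.
by rewrite e1 e2 andbCA.
Qed.

Lemma ncomp0 : #|porbits s| = ncomp set0.
Proof.
by rewrite /ncomp /porbits (eq_imset _ (fun u => esym (cls_porbit0 u))).
Qed.

Lemma rX_sub (X Y : {set D}) : Y \subset X -> subrel (rX Y) (rX X).
Proof.
move=> sYX b c; rewrite /rX => /or3P [->|->|/and3P [h1 h2 h3]]; rewrite ?orbT //.
by rewrite (subsetP sYX _ h1) (subsetP sYX _ h2) h3 !orbT.
Qed.

Section Step.
Variables (X : {set D}) (x : D).
Hypotheses (clX : aclosed X) (xX : x \in X).
Let Y := X :\ x :\ a x.

Lemma YsubX : Y \subset X.
Proof. by apply/subsetP => z; rewrite !inE => /and3P []. Qed.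

Lemma rX_split b c : rX X b c -> rX Y b c || ((b == x) || (b == a x)).
Proof.
rewrite /rX => /or3P [->|->|/and3P [h1 h2 h3]]; rewrite ?orbT //.
have [->|bx] := eqVneq b x; first by rewrite !orbT.
have [->|bax] := eqVneq b (a x); first by rewrite !orbT.
have abx : a b != x by apply: contra_neq bax => <-; rewrite aK.
have abax : a b != a x by apply: contra_neq bx => /(congr1 a); rewrite !aK.
by rewrite !inE bx bax abx abax h1 h2 h3 !orbT.
Qed.

Lemma rX_split2 b c : rX X b c ->
  [|| rX Y b c, (b == x) && (c == a x) | (b == a x) && (c == x)].
Proof.
rewrite /rX => /or3P [->|->|/and3P [h1 h2 /eqP h3]]; rewrite ?orbT //.
have [eb|bx] := eqVneq b x; first by rewrite h3 eb !eqxx /= ?orbT.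
have [eb|bax] := eqVneq b (a x); first by rewrite h3 eb aK !eqxx /= ?orbT.
have abx : a b != x by apply: contra_neq bax => <-; rewrite aK.
have abax : a b != a x by apply: contra_neq bx => /(congr1 a); rewrite !aK.
by rewrite !inE bx bax abx abax h1 h2 h3 eqxx /= ?orbT.
Qed.

Lemma connect_decomp u w : connect (rX X) u w ->
  [|| connect (rX Y) u w, connect (rX Y) u x | connect (rX Y) u (a x)].
Proof.
move=> cuw; apply: (connect_closure (P := fun w =>
  [|| connect (rX Y) u w, connect (rX Y) u x | connect (rX Y) u (a x)])) cuw _; last first.
  by rewrite connect0.
move=> b c /or3P [cb|->|->]; rewrite ?orbT // => /rX_split /orP [rbc|/orP [/eqP ebx|/eqP ebax]].
- by rewrite (connect_trans cb (connect1 rbc)).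
- by rewrite -ebx cb orbT.
- by rewrite -ebax cb !orbT.
Qed.

Lemma cls_eq Z u v : connect (rX Z) u v -> cls Z u = cls Z v.
Proof.
move=> cuv; apply/setP => w; rewrite !inE; apply/idP/idP => h.
- by apply: connect_trans h; rewrite (sym_connect_sym (@rX_sym Z)).
- exact: connect_trans cuv h.
Qed.

Lemma ncomp_join : ncomp Y <= (ncomp X).+1.
Proof.
rewrite /ncomp.
have sub : [set cls Y u | u : D] \subset
   [set cls Y x; cls Y (a x)] :|: ([set cls X u | u : D] :\ cls X x).
  apply/subsetP => C /imsetP [u _ ->].
  have [cux|ncux] := boolP (connect (rX Y) u x).
    by rewrite !inE (cls_eq cux) eqxx.
  have [cuax|ncuax] := boolP (connect (rX Y) u (a x)).
    by rewrite !inE (cls_eq cuax) eqxx orbT.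
  have eqc : cls Y u = cls X u.
    apply/setP => w; rewrite !inE; apply/idP/idP.
    - exact: connect_sub (fun b c h => connect1 (rX_sub YsubX h)) _ _.
    - by move/connect_decomp; rewrite (negbTE ncux) (negbTE ncuax) !orbF.
  have ncx : ~~ connect (rX X) u x.
    by apply/negP => /connect_decomp; rewrite (negbTE ncux) (negbTE ncuax) !orbF.
  rewrite !inE eqc; apply/orP; right; apply/andP; split; last exact: imset_f.
  apply/negP => /eqP E; move: ncx.
  have : x \in cls X x by rewrite inE connect0.
  by rewrite -E inE => ->.
have := subset_leq_card sub; rewrite cardsU.
have h1 : #|[set cls Y x; cls Y (a x)]| <= 2 by rewrite cards2; case: (_ != _).
have h2 : #|[set cls X u | u : D] :\ cls X x| = (#|[set cls X u | u : D]|).-1.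
  have hm : cls X x \in [set cls X u | u : D] by apply: imset_f.
  by rewrite [in RHS](cardsD1 (cls X x)) hm.
have h3 : 0 < #|[set cls X u | u : D]|.
  by apply/card_gt0P; exists (cls X x); apply: imset_f.
lia.
Qed.

Lemma connect_same : x \in porbit (pX Y * s)%g (a x) -> connect (rX X) =2 connect (rX Y).
Proof.
move=> xin.
have cax : connect (rX Y) x (a x).
  by rewrite (sym_connect_sym (@rX_sym Y)); apply: porbit_connect.
move=> u w; apply/idP/idP; apply: connect_sub => b c.
- move/rX_split2 => /or3P [h|/andP [/eqP -> /eqP ->]|/andP [/eqP -> /eqP ->]].
  + exact: connect1.
  + exact: cax.
  + by rewrite (sym_connect_sym (@rX_sym Y)).
- by move=> h; apply: connect1; apply: (rX_sub YsubX).
Qed.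

End Step.

Lemma card_step X x : aclosed X -> x \in X -> #|X| = (#|X :\ x :\ a x|).+2.
Proof.
move=> clX xX; have axX : a x \in X by rewrite clX.
rewrite (cardsD1 x) xX (cardsD1 (a x) (X :\ x)) !inE a_nfix axX.
by [].
Qed.

Lemma porbits_step X x : aclosed X -> x \in X ->
  #|porbits (pX X * s)%g| + (x \notin porbit (pX (X :\ x :\ a x) * s)%g (a x)).*2
  = (#|porbits (pX (X :\ x :\ a x) * s)%g|).+1.
Proof.
move=> clX xX; rewrite (pX_step clX xX) -mulgA porbits_mul_tperm.
by rewrite eq_sym a_nfix addn1.
Qed.

Lemma euler_core X : aclosed X ->
  (#|porbits (pX X * s)%g| + #|porbits s|).*2 <= #|X| + 4 * ncomp X.
Proof.
have [n] := ubnP #|X|; elim: n X => // n IH X ltX clX.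
have [X0|[x xX]] := set_0Vmem X.
  rewrite X0 pX0 mul1g cards0 -ncomp0 -muln2; lia.
have clY := aclosed_step x clX.
have cX := card_step clX xX.
have IHY := IH (X :\ x :\ a x) (ltac:(lia)) clY.
have hP := porbits_step clX xX.
case: (boolP (x \in porbit (pX (X :\ x :\ a x) * s)%g (a x))) => hin; rewrite hin /= in hP.
- have eqc := connect_same hin.
  have -> : ncomp X = ncomp (X :\ x :\ a x).
    have ecls : forall u, cls X u = cls (X :\ x :\ a x) u.
      by move=> u; apply/setP => w; rewrite !inE eqc.
    by rewrite /ncomp (eq_imset _ ecls).
  rewrite -!muln2 in IHY hP *; move: hP IHY cX; move: #|porbits (pX X * s)%g| => PX; move: #|porbits s| => S; move: (#|porbits _|) => PY. lia.
- have := @ncomp_join X x; rewrite -!muln2 in IHY hP *; move: hP IHY cX; move: #|porbits (pX X * s)%g| => PX; move: #|porbits s| => S; move: (#|porbits _|) => PY. lia.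
Qed.

Lemma euler_bad x :
  (forall u v, connect (rX ([set: D] :\ x :\ a x)) u v) ->
  x \in porbit (pX [set: D] * s)%g (a x) ->
  (#|porbits (pX [set: D] * s)%g| + #|porbits s|).*2 <= #|D|.
Proof.
move=> Hc hin.
have clT : aclosed [set: D] by move=> z; rewrite !inE.
have xT : x \in [set: D] by rewrite inE.
set X0 := [set: D] :\ x :\ a x.
have cT := card_step clT xT; rewrite cardsT -/X0 in cT.
have core := euler_core (aclosed_step x clT); rewrite -/X0 in core.
have nc : ncomp X0 <= 1.
  rewrite /ncomp; apply: (@leq_trans #|[set [set: D]]|); last by rewrite cards1.
  apply: subset_leq_card; apply/subsetP => C /imsetP [u _ ->].
  rewrite inE; apply/eqP/setP => w; rewrite !inE; exact: Hc.
have hP := porbits_mul_tperm (pX [set: D] * s)%g x (a x).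
rewrite hin eq_sym a_nfix /= in hP.
have e0 : (tperm x (a x) * (pX [set: D] * s))%g = (pX X0 * s)%g.
  by rewrite (pX_step clT xT) -/X0 !mulgA tperm2 mul1g.
rewrite e0 in hP.
rewrite -!muln2 in core hP *; move: hP core cT; move: #|porbits (pX [set: D] * s)%g| => PX;
  move: #|porbits s| => S; move: (#|porbits _|) => PY. lia.
Qed.

End Euler.
Lemma porbit_fconnect (D : finType) (p : {perm D}) (f : D -> D) :
  p =1 f -> forall u w, (w \in porbit p u) = fconnect f u w.
Proof.
move=> pf u w; apply/porbitP/idP => [[i ->]|h].
- by rewrite permX (eq_iter pf) fconnect_iter.
- by exists (findex f u w); rewrite permX (eq_iter pf) iter_findex.
Qed.

Lemma porbits_fcard (D : finType) (p : {perm D}) (f : D -> D) :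
  p =1 f -> #|porbits p| = fcard f D.
Proof.
move=> pf.
have finj : injective f by move=> x y; rewrite -!pf; apply: perm_inj.
have csym : connect_sym (frel f) by move=> x y; apply: fconnect_sym.
set R := [set d | roots (frel f) d].
have -> : porbits p = porbit p @: R.
  apply/setP => P; apply/imsetP/imsetP => [[d _ ->]|[d _ ->]]; last by exists d.
  exists (root (frel f) d); first by rewrite inE roots_root.
  apply/eqP; rewrite eq_porbit_mem (porbit_fconnect pf).
  by rewrite csym connect_root.
rewrite card_in_imset.
  by rewrite /n_comp_mem; apply: eq_card => d; rewrite !inE andbT.
move=> x y; rewrite !inE => /eqP rx /eqP ry /eqP.
rewrite eq_porbit_mem (porbit_fconnect pf) => cyx.
by rewrite -rx -ry; apply/(rootP csym); rewrite csym.
Qed.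

Section GraphFacts.
Variable T : finType.
Implicit Types (g : rel T) (V : {set T}) (E : {set {set T}}).

Lemma att_sub g V E : attachments g V E \subset V.
Proof. by apply/subsetP => x; rewrite inE => /andP []. Qed.

Lemma noatt g V E u f : u \in V -> u \notin attachments g V E ->
  f \in edges g -> u \in f -> f \in E.
Proof.
move=> uV na fe uf; apply/negPn/negP => fE; move/negP: na; apply.
by rewrite inE uV; apply/existsP; exists f; rewrite fe uf fE.
Qed.

Lemma edgesP g f : f \in edges g -> exists x y, g x y /\ f = [set x; y].
Proof. by rewrite inE => /existsP [x /existsP [y /andP [gxy /eqP ->]]]; exists x, y. Qed.

Lemma edge_in g x y : g x y -> [set x; y] \in edges g.
Proof. by move=> gxy; rewrite inE; apply/existsP; exists x; apply/existsP; exists y; rewrite gxy eqxx. Qed.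

Lemma card3_sub (A : {set T}) a b c : a != b -> c != a -> c != b ->
  a \in A -> b \in A -> c \in A -> 3 <= #|A|.
Proof.
move=> ab ca cb aA bA cA.
have sub : c |: [set a; b] \subset A.
  by apply/subsetP => z /setU1P [->|/set2P [->|->]].
apply: leq_trans (subset_leq_card sub).
by rewrite cardsU1 cards2 !inE ab negb_or ca cb.
Qed.

End GraphFacts.

Section Main.
Variables (T D : finType) (hd : D -> T) (alpha sigma : D -> D) (o : D) (r0 r1 : T) (d0 : D).
Hypotheses (aK : involutive alpha) (anfix : forall d, alpha d != d)
  (sinj : injective sigma) (hds : forall d, hd (sigma d) = hd d)
  (sconn : forall d d', hd d = hd d' -> fconnect sigma d d')
  (hsurj : forall x, exists d, hd d = x)
  (heuler : #|T| + fcard (face_perm alpha sigma) D = #|D| %/ 2 + 2)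
  (hloop : forall d, hd (alpha d) != hd d)
  (huniq : forall d d', hd d = hd d' -> hd (alpha d) = hd (alpha d') -> d = d')
  (card3 : 3 < #|T|)
  (k3c : forall S : {set T}, #|S| < 3 -> forall x y, x \notin S -> y \notin S ->
    connect [rel a b | [&& map_adj hd alpha a b, a \notin S & b \notin S]] x y)
  (onr0 : on_face hd (face_perm alpha sigma) o r0)
  (onr1 : on_face hd (face_perm alpha sigma) o r1)
  (hd0 : hd d0 = r0) (hd1 : hd (alpha d0) = r1).

Let e := [set d0; alpha d0].
Let phi := face_perm alpha sigma.
Let phi' := face_perm alpha (del_rot sigma e).
Let g' := del_adj hd alpha e.
Let o' := if o \in e then face_perm alpha sigma o else o.
Let VC := [set x | on_face hd phi' o' x].
Let EC := [set [set hd d; hd (alpha d)] | d in [set d | fconnect phi' o' d]].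

Lemma hd_fconnect d d' : fconnect sigma d d' -> hd d' = hd d.
Proof.
move=> c; apply/eqP; apply: (connect_closure (P := fun z => hd z == hd d)) c _ => //.
by move=> a b /eqP ha /eqP <-; rewrite hds ha.
Qed.

Lemma deg2 z : sigma z != z.
Proof.
apply/negP => /eqP sz.
have only : forall d, hd d = hd z -> d = z.
  move=> d /esym /sconn c.
  by rewrite -(iter_findex c); elim: (findex _ _ _) => //= n ->.
have [w ww] : exists w, w \notin [set hd z; hd (alpha z)].
  case: (pickP [pred w | w \notin [set hd z; hd (alpha z)]]) => [w ww|none]; first by exists w.
  have : [set: T] \subset [set hd z; hd (alpha z)].
    by apply/subsetP => w _; move: (none w) => /= /negbFE.
  move/subset_leq_card; rewrite cardsT.
  have : #|[set hd z; hd (alpha z)]| <= 2 by rewrite cards2; case: (_ != _).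
  lia.
set S := [set hd (alpha z)].
have := k3c (S := S) (ltac:(by rewrite cards1)) (x := hd z) (y := w).
rewrite !inE eq_sym hloop; move: ww; rewrite !inE negb_or => /andP [wz wa].
move=> /(_ isT wa) c.
suff : w == hd z by rewrite (negbTE wz).
apply: (connect_closure (P := fun t => t == hd z)) c _ => //.
move=> a b /eqP -> /and3P [/existsP [d /andP [/eqP hdz /eqP hb]] _].
by rewrite !inE -hb (only _ hdz) eqxx.
Qed.

Lemma r01 : r0 != r1.
Proof. by rewrite -hd0 -hd1 eq_sym hloop. Qed.

Lemma e_alpha d : (alpha d \in e) = (d \in e).
Proof.
rewrite !inE; apply/orP/orP => [[/eqP h|/eqP h]|[/eqP ->|/eqP ->]]; rewrite ?aK ?eqxx //.
- by right; rewrite -[d]aK h.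
- by left; rewrite -[d]aK h aK.
- by right.
- by left.
Qed.

Lemma e_hd d d' : d \in e -> d' \in e -> hd d = hd d' -> d = d'.
Proof.
rewrite !inE => /orP [/eqP ->|/eqP ->] /orP [/eqP ->|/eqP ->] // h.
- by move: r01; rewrite -hd0 -hd1 h eqxx.
- by move: r01; rewrite -hd0 -hd1 h eqxx.
Qed.

Lemma hd_sig' d : hd (del_rot sigma e d) = hd d.
Proof. by rewrite /del_rot; case: ifP; rewrite !hds. Qed.

Lemma hd_phi' d : hd (phi' d) = hd (alpha d).
Proof. exact: hd_sig'. Qed.

Lemma phi'_ne d : d \notin e -> phi' d \notin e.
Proof.
move=> de; have ade : alpha d \notin e by rewrite e_alpha.
rewrite /phi' /face_perm /del_rot; case: ifP => [h|/negbT //].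
apply/negP => h2; have := e_hd h2 h; rewrite hds => /(_ erefl) /sinj E.
by move: ade; rewrite -E h.
Qed.

Lemma phi'_phi d : phi d \notin e -> phi' d = phi d.
Proof. by rewrite /phi' /phi /face_perm /del_rot => /negbTE ->. Qed.

Lemma phi'_phiE d : phi d \in e -> phi' d = phi (alpha (phi d)).
Proof.
move=> h; rewrite /phi' {1}/face_perm /del_rot.
have -> : sigma (alpha d) = phi d by [].
by rewrite h; change (sigma (phi d) = sigma (alpha (alpha (phi d)))); rewrite aK.
Qed.

Lemma o'_ne : o' \notin e.
Proof.
rewrite /o'; case: ifP => [oe|/negbT //].
apply/negP => h; have oe' : alpha o \in e by rewrite e_alpha.
have := e_hd h oe'; rewrite /face_perm hds => /(_ erefl) E.
by move: (deg2 (alpha o)); rewrite E eqxx.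
Qed.

Lemma orbit_ne q : fconnect phi' o' q -> q \notin e.
Proof.
move=> c; rewrite -(iter_findex c); elim: (findex _ _ _) => [|n IH]; first exact: o'_ne.
by rewrite iterS; apply: phi'_ne.
Qed.

Lemma VC_hd q : fconnect phi' o' q -> hd q \in VC.
Proof. by move=> c; rewrite inE; apply/existsP; exists q; rewrite c eqxx. Qed.

Lemma orbit_step q : fconnect phi' o' q -> fconnect phi' o' (phi' q).
Proof. by move=> c; apply: connect_trans c (fconnect1 _ _). Qed.

Lemma VC_alpha q : fconnect phi' o' q -> hd (alpha q) \in VC.
Proof. by move=> c; rewrite -hd_phi'; apply: VC_hd; apply: orbit_step. Qed.

Lemma walk q : fconnect phi' o' q -> forall n,
  fconnect phi' o' (iter n phi q) \/
  exists x, [/\ x \in e, fconnect phi q x, hd x \in VC & fconnect phi' o' (phi (alpha x))].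
Proof.
move=> c n; elim: n q c => [|n IH] q c; first by left.
rewrite iterSr; case: (boolP (phi q \in e)) => h.
- right; exists (phi q); split => //; first exact: fconnect1.
  + have -> : hd (phi q) = hd (alpha q) by apply: hds.
    exact: VC_alpha c.
  + by rewrite -phi'_phiE //; apply: orbit_step.
- have := IH (phi q); rewrite -phi'_phi //; move/(_ (orbit_step c)) => [l|[x [xe cx hx cx']]].
  + by left.
  + right; exists x; split => //; apply: connect_trans (fconnect1 _ _) _.
    by rewrite -phi'_phi.
Qed.

Lemma fcard_sigma : fcard sigma D = #|T|.
Proof.
have csym : connect_sym (frel sigma) by move=> x y; apply: fconnect_sym.
set R := [set d | roots (frel sigma) d].
have -> : fcard sigma D = #|R|.
  by rewrite /n_comp_mem; apply: eq_card => d; rewrite !inE andbT.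
have himg : hd @: R = [set: T].
  apply/setP => t; rewrite inE; apply/imsetP.
  have [d hdt] := hsurj t; exists (root (frel sigma) d); first by rewrite inE roots_root.
  by rewrite -hdt (hd_fconnect (connect_root _ d)).
rewrite -cardsT -himg card_in_imset // => x y; rewrite !inE => /eqP rx /eqP ry hxy.
by rewrite -rx -ry; apply/(rootP csym); apply: sconn.
Qed.

Let ps := perm sinj.
Let pphi := (pX aK [set: D] * ps)%g.

Lemma pphiE : pphi =1 phi.
Proof. by move=> d; rewrite permM !permE /aX_fun !inE. Qed.

Lemma euler_eq2 : #|porbits ps| + #|porbits pphi| = #|D| %/ 2 + 2.
Proof.
by rewrite (porbits_fcard pphiE) (porbits_fcard (permE sinj)) fcard_sigma.
Qed.

Lemma setC_e x d : x \in e -> (d \in [set: D] :\ x :\ alpha x) = (d \notin e).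
Proof.
rewrite !inE => /orP [/eqP ->|/eqP ->]; rewrite ?aK andbT.
- by rewrite negb_or andbC.
- by rewrite negb_or.
Qed.

Lemma Hconn x : x \in e -> forall u v, connect (rX alpha ps ([set: D] :\ x :\ alpha x)) u v.
Proof.
move=> xe.
set r := rX alpha ps _.
have rsym : connect_sym r by apply: sym_connect_sym; apply: rX_sym.
have sig_c : forall d d', fconnect sigma d d' -> connect r d d'.
  move=> d d'; apply: connect_sub => b c /eqP <-; apply: connect1.
  by rewrite /r /rX permE eqxx.
have edge_c : forall d, d \notin e -> connect r d (alpha d).
  move=> d de; apply: connect1; rewrite /r /rX !setC_e // e_alpha de eqxx.
  by rewrite !orbT.
pose Good t := [forall d, (hd d == t) ==> connect r d0 d].
have good_step : forall d, d \notin e -> Good (hd d) -> Good (hd (alpha d)).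
  move=> d de /forallP G; apply/forallP => d'; apply/implyP => /eqP hd'.
  have := G d; rewrite eqxx /= => c1.
  apply: connect_trans c1 (connect_trans (edge_c _ de) (sig_c _ _ _)).
  exact: sconn.
have good_r0 : Good r0.
  by apply/forallP => d; apply/implyP => /eqP hd'; apply: sig_c; apply: sconn; rewrite hd0.
have sd0e : sigma d0 \notin e.
  rewrite !inE negb_or deg2 /=; apply/eqP => h.
  by move: r01; rewrite -hd0 -hd1 -h hds eqxx.
set y := hd (alpha (sigma d0)).
have good_y : Good y by apply: good_step => //; rewrite hds hd0.
have yr0 : y != r0 by rewrite /y -hd0 -(hds d0) hloop.
have allgood : forall t, Good t.
  move=> t; have [->|tr0] := eqVneq t r0; first exact: good_r0.
  have := k3c (S := [set r0]) (ltac:(by rewrite cards1)) (x := y) (y := t).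
  rewrite !inE yr0 tr0 => /(_ isT isT) c.
  apply: (connect_closure (P := Good)) c good_y.
  move=> a b Ga /and3P [/existsP [d /andP [/eqP hda /eqP hdb]]].
  rewrite !inE => ar0 br0.
  have de : d \notin e.
    rewrite !inE negb_or; apply/andP; split; apply/eqP => E.
    - by move: ar0; rewrite -hda E hd0 eqxx.
    - by move: br0; rewrite -hdb E aK hd0 eqxx.
  by rewrite -hdb; apply: good_step => //; rewrite hda.
have c0 : forall d, connect r d0 d.
  move=> d; have /forallP /(_ d) := allgood (hd d); by rewrite eqxx.
move=> u v; apply: connect_trans (c0 v); rewrite rsym; exact: c0.
Qed.

Lemma no_bad x : x \in e -> ~~ fconnect phi (alpha x) x.
Proof.
move=> xe; apply/negP => c.
have hin : x \in porbit pphi (alpha x) by rewrite (porbit_fconnect pphiE).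
have := euler_bad anfix (Hconn xe) hin.
have := euler_eq2; rewrite -/pphi.
move: #|porbits ps| #|porbits pphi| => A B.
rewrite -muln2; lia.
Qed.

Lemma phi_inj : injective phi.
Proof. by move=> x y /sinj /(can_inj aK). Qed.

Lemma e_cases x y : x \in e -> y \in e -> (y == x) || (y == alpha x).
Proof.
by rewrite !inE => /orP [/eqP ->|/eqP ->] /orP [/eqP ->|/eqP ->]; rewrite ?aK eqxx ?orbT.
Qed.

Lemma both_in x : x \in e -> hd x \in VC -> fconnect phi' o' (phi (alpha x)) ->
  (r0 \in VC) && (r1 \in VC).
Proof.
move=> xe hx cq.
have cqa : fconnect phi (phi (alpha x)) (alpha x).
  by rewrite fconnect_sym; [apply: fconnect1 | apply: phi_inj].
have hax : hd (alpha x) \in VC.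
  have := walk cq (findex phi (phi (alpha x)) (alpha x)); rewrite iter_findex //.
  case=> [c|[x'' [x''e cx'' hx'' _]]].
    by move: (orbit_ne c); rewrite e_alpha xe.
  case/orP: (e_cases xe x''e) => /eqP E; last by rewrite -E.
  rewrite E in cx''.
  by move: (no_bad xe); rewrite (connect_trans (fconnect1 phi (alpha x)) cx'').
move: xe; rewrite in_set2 => /orP [/eqP E|/eqP E]; move: hx hax; rewrite E ?aK hd0 hd1.
- by move=> h0 h1; apply/andP.
- by move=> h1 h0; apply/andP.
Qed.

Lemma r_in r : (r == r0) || (r == r1) -> on_face hd phi o r -> r \in VC.
Proof.
move=> hr /existsP [d /andP [cod /eqP hdr]].
have co'd : fconnect phi o' d.
  rewrite /o'; case: ifP => // _.
  by rewrite -same_fconnect1 //; apply: phi_inj.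
case: (walk (connect0 _ o') (findex phi o' d)) => [c|[x [xe _ hx cq]]].
  by move: c; rewrite iter_findex // => /VC_hd; rewrite hdr.
have /andP [h0 h1] := both_in xe hx cq.
by case/orP: hr => /eqP ->.
Qed.

Lemma g'_sym x y : g' x y -> g' y x.
Proof.
case/existsP => d /and3P [de /eqP hx /eqP hy]; apply/existsP; exists (alpha d).
by rewrite e_alpha de aK hx hy !eqxx.
Qed.

Lemma VC_edge y : y \in VC -> exists z, z \in VC /\ g' y z.
Proof.
rewrite inE => /existsP [d /andP [cd /eqP hdy]].
exists (hd (alpha d)); split; first exact: VC_alpha.
by apply/existsP; exists d; rewrite (orbit_ne cd) hdy !eqxx.
Qed.

Lemma r0VC : r0 \in VC. Proof. by apply: r_in onr0; rewrite eqxx. Qed.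
Lemma r1VC : r1 \in VC. Proof. by apply: r_in onr1; rewrite eqxx orbT. Qed.

Lemma exists_w (A : {set T}) : #|A| < 3 -> exists2 w, w \in VC & w \notin A.
Proof.
move=> smallA.
case: (pickP [pred w | (w \in VC) && (w \notin A)]) => [w /andP [h1 h2]|none].
  by exists w.
have inA : forall w, w \in VC -> w \in A.
  by move=> w wVC; move: (none w) => /=; rewrite wVC /= => /negbFE.
have co : fconnect phi' o' o' := connect0 _ o'.
have hp := inA _ (VC_hd co); have hq := inA _ (VC_alpha co).
have r0A := inA _ r0VC; have r1A := inA _ r1VC.
have pq : hd (alpha o') != hd o' := hloop o'.
have p01 : (hd o' == r0) || (hd o' == r1).
  apply/negPn/negP; rewrite negb_or => /andP [a b].
  by move: smallA; rewrite ltnNge (card3_sub r01 a b r0A r1A hp).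
have q01 : (hd (alpha o') == r0) || (hd (alpha o') == r1).
  apply/negPn/negP; rewrite negb_or => /andP [a b].
  by move: smallA; rewrite ltnNge (card3_sub r01 a b r0A r1A hq).
move: o'_ne; rewrite in_set2 negb_or => /andP [/negP n0 /negP n1].
case/orP: p01 => /eqP hp'; case/orP: q01 => /eqP hq'.
- by move: pq; rewrite hp' hq' eqxx.
- by exfalso; apply: n0; apply/eqP; apply: huniq; rewrite ?hd0 ?hd1.
- by exfalso; apply: n1; apply/eqP; apply: huniq; rewrite ?aK ?hd0 ?hd1.
- by move: pq; rewrite hp' hq' eqxx.
Qed.

Lemma bridge3 V E : is_bridge g' VC EC V E -> ~~ trivial_bridge V E ->
  3 <= #|attachments g' V E|.
Proof.
move=> [bc minb] ntriv; rewrite leqNgt; apply/negP => smallA.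
set A := attachments g' V E in smallA *.
have bc' := bc; case/and3P: bc' => sg AVC notsub.
case/andP: sg => Esub Eok.
have Esub' : forall f, f \in E -> f \subset V.
  by move=> f fE; move/forall_inP: Eok; apply.
have [v vV vVC] : exists2 v, v \in V & v \notin VC.
  case: (boolP (V \subset VC)) => [VsubVC|/subsetPn [v vV vVC]]; last by exists v.
  move: notsub; rewrite VsubVC /= => /subsetPn [f fE fEC].
  have fed := subsetP Esub _ fE.
  have bcf : bridge_cond g' VC EC f [set f].
    apply/and3P; split.
    - apply/andP; split; first by rewrite sub1set.
      by apply/forall_inP => f'; rewrite inE => /eqP ->.
    - apply: subset_trans (att_sub _ _ _) _.
      exact: subset_trans (Esub' _ fE) VsubVC.
    - by rewrite sub1set (negbTE fEC) andbF.
  have := minb f [set f] (Esub' _ fE) (ltac:(by rewrite sub1set)).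
  case: (eqVneq (f, [set f]) (V, E)) => [Eq _|ne /(_ isT)].
    case: Eq => eV eE; move: ntriv; rewrite -eV -eE /trivial_bridge.
    by move=> /existsPn /(_ f); rewrite !eqxx.
  by rewrite bcf.
have AVC' : forall u, u \in A -> u \in VC := subsetP AVC.
pose rR := [rel a b | [&& g' a b, a \notin VC & b \notin VC]].
pose R := [set u | connect rR v u].
have nbr : forall a b, a \in V -> a \notin VC -> g' a b -> [set a; b] \in E /\ b \in V.
  move=> a b aV aVC gab.
  have aA : a \notin A by apply: contra aVC; apply: AVC'.
  have fE := noatt aV aA (edge_in gab) (ltac:(by rewrite !inE eqxx)).
  by split => //; apply: (subsetP (Esub' _ fE)); rewrite !inE eqxx orbT.
have key : forall u, u \in R -> (u \in V) && (u \notin VC).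
  move=> u; rewrite inE => c.
  apply: (connect_closure (P := fun u => (u \in V) && (u \notin VC))) c _; last by rewrite vV vVC.
  move=> a b /andP [aV aVC] /and3P [gab _ bVC]; rewrite bVC andbT.
  by case: (nbr a b aV aVC gab).
have Rext : forall u b, u \in R -> g' u b -> b \notin VC -> b \in R.
  move=> u b uR gub bVC; have /andP [_ uVC] := key u uR.
  move: uR; rewrite !inE => cu; apply: connect_trans cu (connect1 _).
  by rewrite /= gub uVC bVC.
pose V' := R :|: [set y | [exists u in R, g' u y]].
pose E' := [set f in edges g' | [exists u in R, u \in f]].
have V'V : V' \subset V.
  apply/subsetP => y; rewrite in_setU => /orP [yR|]; first by have /andP [] := key y yR.
  rewrite inE => /exists_inP [u uR guy].
  have /andP [uV uVC] := key u uR.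
  by case: (nbr u y uV uVC guy).
have E'E : E' \subset E.
  apply/subsetP => f; rewrite inE => /andP [fed /exists_inP [u uR uf]].
  have /andP [uV uVC] := key u uR.
  exact: noatt uV (ltac:(by apply: contra uVC; apply: AVC')) fed uf.
have vR : v \in R by rewrite inE connect0.
have bc' : bridge_cond g' VC EC V' E'.
  apply/and3P; split.
  - apply/andP; split; first by apply/subsetP => f; rewrite inE => /andP [].
    apply/forall_inP => f; rewrite inE => /andP [/edgesP [x [y [gxy ->]]] /exists_inP [u uR uf]].
    apply/subsetP => z; rewrite in_set2 /V' in_setU.
    move: uf; rewrite in_set2 => /orP [/eqP ux|/eqP uy] /orP [/eqP zx|/eqP zy].
    + by rewrite zx -ux uR.
    + by apply/orP; right; rewrite inE; apply/exists_inP; exists u => //; rewrite zy ux.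
    + by apply/orP; right; rewrite inE; apply/exists_inP; exists u => //; rewrite zx uy; apply: g'_sym.
    + by rewrite zy -uy uR.
  - apply/subsetP => x; rewrite inE => /andP [xV' /exists_inP [f fed /andP [xf fE']]].
    have xR : x \notin R.
      by apply: contra fE' => xR; rewrite inE fed; apply/exists_inP; exists x.
    move: xV'; rewrite inE (negbTE xR) /= inE => /exists_inP [u uR gux].
    by apply/negPn/negP => xVC; move: xR; rewrite (Rext u x uR gux xVC).
  - apply/negP => /andP [/subsetP h _].
    by move: vVC; rewrite (h v) // inE vR.
have [eV eE] : V' = V /\ E' = E.
  case: (eqVneq (V', E') (V, E)) => [[-> ->] //|ne].
  by move: (minb V' E' V'V E'E ne); rewrite bc'.
have [w wVC wA] := exists_w smallA.
have vA : v \notin A by apply: contra vVC; apply: AVC'.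
have := k3c smallA vA wA => c.
suff : w \in R by move/key; rewrite wVC andbF.
apply: (connect_closure (P := fun u => u \in R)) c vR.
move=> u b uR /and3P [/existsP [d /andP [/eqP hdu /eqP hdb]] uA bA].
have /andP [uV uVC] := key u uR.
have de : d \notin e.
  apply/negP; rewrite in_set2 => /orP [/eqP Ed|/eqP Ed]; move: uVC; rewrite -hdu Ed ?hd0 ?hd1.
  - by rewrite r0VC.
  - by rewrite r1VC.
have gub : g' u b by apply/existsP; exists d; rewrite de hdu hdb !eqxx.
case: (boolP (b \in VC)) => bVC; last exact: Rext u b uR gub bVC.
exfalso; have [fE bV] := nbr u b uV uVC gub.
have [z [zVC gbz]] := VC_edge bVC.
have fnE : [set b; z] \notin E.
  apply/negP; rewrite -eE inE => /andP [_ /exists_inP [u' u'R]].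
  rewrite in_set2 => /orP [/eqP Ed|/eqP Ed]; move: (key u' u'R); rewrite Ed ?bVC ?zVC andbF //.
have : b \in A.
  rewrite inE bV; apply/existsP; exists [set b; z].
  by rewrite edge_in // in_set2 eqxx fnE.
by rewrite (negbTE bA).
Qed.

End Main.

Unset Implicit Arguments.

Theorem claim2 (T D : finType) (hd : D -> T) (alpha sigma : D -> D)
    (o : D) (r0 r1 : T) (d0 : D) :
  planar_map hd alpha sigma ->
  simple_map hd alpha ->
  k_connected (map_adj hd alpha) 3 ->
  4 <= #|T| ->
  (* o is a dart of the outer face of L; r0, r1 lie on it *)
  on_face hd (face_perm alpha sigma) o r0 ->
  on_face hd (face_perm alpha sigma) o r1 ->
  (* d0 is the dart of the edge (r0, r1) *)
  hd d0 = r0 -> hd (alpha d0) = r1 ->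
  let e := [set d0; alpha d0] in
  (* embedding of L' = L - (r0, r1) *)
  let phi' := face_perm alpha (del_rot sigma e) in
  let g' := del_adj hd alpha e in
  (* a dart of the outer face of L' *)
  let o' := if o \in e then face_perm alpha sigma o else o in
  (* C = boundary of the outer face of L' *)
  let VC := [set x | on_face hd phi' o' x] in
  let EC := [set [set hd d; hd (alpha d)] | d in [set d | fconnect phi' o' d]] in
  forall (V : {set T}) (E : {set {set T}}),
    is_bridge g' VC EC V E -> ~~ trivial_bridge V E ->
    3 <= #|attachments g' V E|.
Proof.
move=> [[aK anfix sinj hds [sconn hsurj]] _ heuler] [hloop huniq] [card3 k3c] _
  onr0 onr1 hd0 hd1 e phi' g' o' VC EC V E.
exact: (bridge3 aK anfix sinj hds sconn hsurj heuler hloop huniq card3 k3c onr0 onr1 hd0 hd1).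
Qed.
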